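(* Let $n\ge 2$ and $q=e^{2\pi i/6}$. For each $i$, conjugation by $s_i$ maps the set $\{\pm w\}$ of signed basis words of $Q_n$ to itself, i.e. $x\mapsto s_i^{-1}xs_i$ acts on the basis $\{u_1^{\epsilon_1}\cdots u_{n-1}^{\epsilon_{n-1}}v_1^{\nu_1}\cdots v_{n-1}^{\nu_{n-1}}\}$ of $Q_n$ by a signed permutation. Consequently, the image of the group $G_n=\langle s_1,\dots,s_{n-1}\rangle$ in the automorphism group of $Q_n$ under the conjugation action is finite, and the kernel of this action is contained in $Z(Q_n)$.
   Context: $Q_n$ is the $\mathbb{C}$-algebra with generators $u_1,v_1,\dots,u_{n-1},v_{n-1}$ and relations (G1) $u_i^2=v_i^2=-1$; (G2) $[u_i,v_j]=-1$ if $|i-j|\le1$; (G3) $[u_i,v_j]=1$ if $|i-j|\ge2$; (G4) $[u_i,u_j]=[v_i,v_j]=1$, with $[a,b]=aba^{-1}b^{-1}$. The words $u_1^{\epsilon_1}\cdots u_{n-1}^{\epsilon_{n-1}}v_1^{\nu_1}\cdots v_{n-1}^{\nu_{n-1}}$ ($\epsilon_i,\nu_i\in\{0,1\}$) form a basis of $Q_n$. $s_i=\frac{-1}{2q}(1+u_i+v_i+u_iv_i)$ for $1\le i\le n-1$ (these are invertible). *)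

(* Defs.v *)
From HB Require Import structures.
From mathcomp Require Import all_boot all_order all_algebra all_fingroup all_field.
Set Implicit Arguments. Unset Strict Implicit. Unset Printing Implicit Defensive.
Import Order.TTheory GRing.Theory Num.Theory.
Local Open Scope ring_scope.

(* q = e^{2 pi i / 6} = (1 + i sqrt 3) / 2 in the algebraic complex numbers. *)
Definition q6 : algC := (1 + 'i * sqrtC 3%:R) / 2%:R.

Section QnDefs.
Variables (A : unitAlgType algC) (m : nat).

Definition gcomm (a b : A) : A := a * b * a^-1 * b^-1.

(* index set of the basis words: exponent vectors (eps, nu) *)
Definition word_index := ({ffun 'I_m -> bool} * {ffun 'I_m -> bool})%type.

Definition word (u v : 'I_m -> A) (w : word_index) : A :=
  (\prod_(i < m) (if w.1 i then u i else 1)) *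
  (\prod_(i < m) (if w.2 i then v i else 1)).

Definition sgen (q : algC) (u v : 'I_m -> A) (i : 'I_m) : A :=
  (- 1 / (2%:R * q)) *: (1 + u i + v i + u i * v i).

Inductive in_gen (s : 'I_m -> A) : A -> Prop :=
  | in_gen1 : in_gen s 1
  | in_genM g i : in_gen s g -> in_gen s (g * s i)
  | in_genV g i : in_gen s g -> in_gen s (g * (s i)^-1).

Definition conjA (g x : A) : A := g^-1 * x * g.
End QnDefs.

(* Main.v *)
Require Import Defs.
From HB Require Import structures.
From mathcomp Require Import all_boot all_order all_algebra all_fingroup all_field.
From Stdlib Require Import ClassicalEpsilon.
Import Order.TTheory GRing.Theory Num.Theory.
Local Open Scope ring_scope.
Set Implicit Arguments. Unset Strict Implicit.

Section Gen.
Variable A : unitAlgType algC.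

Lemma flip_nat (F : nat -> A) (e : nat -> bool) (j k : nat) :
 (forall a b, F a * F b = F b * F a) -> F j * F j = -1 -> (j < k)%N ->
 \prod_(0 <= i < k) (if e i then F i else 1) * F j =
 (if e j then -1 else 1) * \prod_(0 <= i < k) (if (if i == j then ~~ e i else e i) then F i else 1).
Proof.
move=> Fc Fj; elim: k => [//|k IH].
rewrite ltnS leq_eqVlt => /orP [/eqP Ejk|ljk].
- subst k; rewrite !big_nat_recr //= eqxx.
  have -> : \prod_(0 <= i < j) (if (if i == j then ~~ e i else e i) then F i else 1)
          = \prod_(0 <= i < j) (if e i then F i else 1).
    by apply: eq_big_nat => i /andP [_ lik]; rewrite ltn_eqF.
  case: (e j) => /=.
    by rewrite -mulrA Fj mulrN1 mulr1 mulN1r.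
  by rewrite mulr1 mul1r.
- rewrite !big_nat_recr //= (gtn_eqF ljk) -mulrA.
  have -> : (if e k then F k else 1) * F j = F j * (if e k then F k else 1).
    by case: (e k); rewrite ?mulr1 ?mul1r.
  by rewrite mulrA IH // !mulrA.
Qed.

Definition flipf K (w : {ffun 'I_K -> bool}) (j : 'I_K) :=
  [ffun i => if i == j then ~~ w i else w i].

Lemma flip_ord K (F : 'I_K.+1 -> A) (w : {ffun 'I_K.+1 -> bool}) j :
 (forall a b, F a * F b = F b * F a) -> F j * F j = -1 ->
 \prod_(i < K.+1) (if w i then F i else 1) * F j =
 (if w j then -1 else 1) * \prod_(i < K.+1) (if flipf w j i then F i else 1).
Proof.
move=> Fc Fj.
have E (w' : {ffun 'I_K.+1 -> bool}) : \prod_(i < K.+1) (if w' i then F i else 1)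
   = \prod_(0 <= i < K.+1) (if w' (inord i) then F (inord i) else 1).
  by rewrite big_mkord; apply: eq_bigr => i _; rewrite inord_val.
rewrite !E.
have := @flip_nat (fun i => F (inord i)) (fun i => w (inord i)) j K.+1.
rewrite inord_val => ->; try (by []); try (by rewrite inord_val); try (by move=> ? ?; apply Fc).
congr (_ * _); apply: eq_big_nat => i /andP [_ lik].
rewrite ffunE.
have -> : (inord i == j) = (i == j :> nat) by rewrite -(inj_eq val_inj) /= inordK.
by [].
Qed.

Lemma prod_sc (I : Type) (r : seq I) (f : I -> A) x :
  (forall i, f i * x = x * f i \/ f i * x = -(x * f i)) ->
  (\prod_(i <- r) f i) * x = x * \prod_(i <- r) f i \/
  (\prod_(i <- r) f i) * x = - (x * \prod_(i <- r) f i).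
Proof.
move=> H; apply: (big_ind (fun p => p * x = x * p \/ p * x = -(x * p))) => //.
- by left; rewrite mul1r mulr1.
- move=> p q Hp Hq.
  have E : p * q * x = p * (q * x) by rewrite mulrA.
  rewrite E.
  case: Hq => ->; rewrite ?mulrN (mulrA p x q); case: Hp => ->;
    rewrite ?mulNr ?opprK -?mulrA; by [left|right].
Qed.

Lemma gcomm_p1 (x y : A) : x \is a GRing.unit -> y \is a GRing.unit ->
  gcomm x y = 1 -> x * y = y * x.
Proof.
move=> xU yU H; rewrite -[x * y](divrK xU) -[x * y / x](divrK yU).
by move: H; rewrite /gcomm => ->; rewrite mul1r.
Qed.

Lemma gcomm_m1 (x y : A) : x \is a GRing.unit -> y \is a GRing.unit ->
  gcomm x y = -1 -> x * y = - (y * x).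
Proof.
move=> xU yU H; rewrite -[x * y](divrK xU) -[x * y / x](divrK yU).
by move: H; rewrite /gcomm => ->; rewrite mulN1r mulNr.
Qed.



Section SWs.
Variables (K : nat) (u v : 'I_K.+1 -> A).
Hypotheses (uu : forall i, u i * u i = -1) (vv : forall i, v i * v i = -1)
  (uc : forall i j, u i * u j = u j * u i) (vc : forall i j, v i * v j = v j * v i)
  (uvs : forall i j, u i * v j = v j * u i \/ u i * v j = - (v j * u i)).

Definition SW (x : A) := exists w, x = word u v w \/ x = - word u v w.

Lemma SW_N x : SW x -> SW (-x).
Proof. by case=> w [->|->]; exists w; [right|left; rewrite opprK]. Qed.

Lemma SW_word w : SW (word u v w).
Proof. by exists w; left. Qed.

Lemma SW_mulu x j : SW x -> SW (x * u j).
Proof.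
case=> w Hx.
suff: SW (word u v w * u j).
  by case: Hx => ->; rewrite ?mulNr //; apply: SW_N.
rewrite /word -mulrA.
have : (\prod_(i < K.+1) (if w.2 i then v i else 1)) * u j =
   u j * (\prod_(i < K.+1) (if w.2 i then v i else 1)) \/
   (\prod_(i < K.+1) (if w.2 i then v i else 1)) * u j =
   - (u j * (\prod_(i < K.+1) (if w.2 i then v i else 1))).
  apply: prod_sc => i; case: (w.2 i); last by left; rewrite mul1r mulr1.
  by case: (uvs j i) => ->; [left|right; rewrite opprK].
case=> ->; rewrite ?mulrN mulrA flip_ord //;
  exists (flipf w.1 j, w.2); rewrite /word /=;
  case: (w.1 j); rewrite ?mulN1r ?mul1r ?mulNr ?opprK; by [left|right].
Qed.

Lemma SW_mulv x j : SW x -> SW (x * v j).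
Proof.
case=> w Hx.
suff: SW (word u v w * v j).
  by case: Hx => ->; rewrite ?mulNr //; apply: SW_N.
rewrite /word -mulrA flip_ord //.
exists (w.1, flipf w.2 j); rewrite /word /=.
case: (w.2 j); rewrite ?mulN1r ?mul1r ?mulrN; by [left|right].
Qed.

Lemma SW_mulr (I : Type) (f : I -> A) (r : seq I) x :
  (forall i y, SW y -> SW (y * f i)) -> SW x -> SW (x * \prod_(i <- r) f i).
Proof.
move=> Hf; elim: r x => [|i r IH] x Hx; first by rewrite big_nil mulr1.
by rewrite big_cons mulrA; apply: IH; apply: Hf.
Qed.

Lemma SW_mulword x w : SW x -> SW (x * word u v w).
Proof.
move=> Hx; rewrite /word mulrA; apply: SW_mulr; last apply: SW_mulr => //.
- by move=> i y Hy; case: (w.2 i); [apply: SW_mulv|rewrite mulr1].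
- by move=> i y Hy; case: (w.1 i); [apply: SW_mulu|rewrite mulr1].
Qed.

Lemma SW_mul x y : SW x -> SW y -> SW (x * y).
Proof.
move=> Hx [w [->|->]]; first exact: SW_mulword.
by rewrite mulrN; apply: SW_N; apply: SW_mulword.
Qed.

Lemma SW_1 : SW 1.
Proof.
exists ([ffun=> false], [ffun=> false]); left.
by rewrite /word !big1 ?mulr1 // => i _; rewrite ffunE.
Qed.

Lemma SW_u j : SW (u j).
Proof. by rewrite -(mul1r (u j)); apply: SW_mulu; apply: SW_1. Qed.

Lemma SW_v j : SW (v j).
Proof. by rewrite -(mul1r (v j)); apply: SW_mulv; apply: SW_1. Qed.

Lemma SW_prod (I : Type) (r : seq I) (f : I -> A) :
  (forall i, SW (f i)) -> SW (\prod_(i <- r) f i).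
Proof. by move=> H; apply: big_ind => //; [apply: SW_1|apply: SW_mul]. Qed.

End SWs.

Section Quat.
Variables (a b : A).
Hypotheses (Ha : a * a = -1) (Hb : b * b = -1) (Hab : a * b = -(b * a)).

Lemma L1 (x y : A) : x * x = -1 -> (1 - x) * ((1 + x) * y) = y *+ 2.
Proof.
move=> Hx; rewrite mulrA mulrDr mulr1 mulrBl mul1r Hx opprK addrA subrK.
by rewrite mulrDl mul1r mulr2n.
Qed.

Lemma L2 (x y : A) : x * x = -1 -> (1 + x) * ((1 - x) * y) = y *+ 2.
Proof.
move=> Hx; have E : (1 + x) * (1 - x) = 1 + 1.
  by rewrite mulrBr mulr1 [(1 + x) * x]mulrDl mul1r Hx opprD addrA addrK opprK.
by rewrite mulrA E mulrDl mul1r mulr2n.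
Qed.

Lemma L3 (x y : A) : x * x = -1 -> (1 - x) * ((1 - x) * y) = - ((x * y) *+ 2).
Proof.
move=> Hx; have E : (1 - x) * (1 - x) = - (x + x).
  rewrite mulrBr mulr1 [(1 - x) * x]mulrBl mul1r Hx opprB.
  by rewrite addrACA addrN add0r opprD.
by rewrite mulrA E mulNr mulrDl mulr2n.
Qed.

Lemma L4 (x y : A) : x * x = -1 -> (1 + x) * ((1 + x) * y) = (x * y) *+ 2.
Proof.
move=> Hx; have E : (1 + x) * (1 + x) = x + x.
  rewrite mulrDr mulr1 [(1 + x) * x]mulrDl mul1r Hx.
  by rewrite [x + -1]addrC addrACA addrN add0r.
by rewrite mulrA E mulrDl mulr2n.
Qed.

Lemma L5 (y : A) : (1 - b) * (a * y) = a * ((1 + b) * y).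
Proof.
rewrite !mulrA; congr (_ * _).
by rewrite mulrBl mul1r mulrDr mulr1 Hab.
Qed.

Lemma tw1 (g x : A) : g * x = x * g -> g * (1 + x) = (1 + x) * g.
Proof. by move=> H; rewrite mulrDr mulr1 H mulrDl mul1r. Qed.

Lemma tw2 (g x : A) : g * x = - (x * g) -> g * (1 + x) = (1 - x) * g.
Proof. by move=> H; rewrite mulrDr mulr1 H mulrBl mul1r. Qed.

Lemma qconj g : (g * a = a * g \/ g * a = -(a * g)) ->
  (g * b = b * g \/ g * b = -(b * g)) ->
  exists e, (e = 1 \/ e = a \/ e = b \/ e = a * b) /\
   ((1 - b) * ((1 - a) * (g * ((1 + a) * (1 + b)))) = (e * g) *+ 4 \/
    (1 - b) * ((1 - a) * (g * ((1 + a) * (1 + b)))) = - ((e * g) *+ 4)).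
Proof.
move=> Hga Hgb; rewrite [g * _]mulrA.
case: Hga => [/tw1|/tw2] ->; rewrite -[_ * g * _]mulrA;
case: Hgb => [/tw1|/tw2] ->.
- exists 1; split; first by left.
  by left; rewrite L1 // mulrnAr L1 // mul1r -mulrnA.
- exists b; split; first by right; right; left.
  by right; rewrite L1 // mulrnAr L3 // mulNrn -mulrnA.
- exists (a * b); split; first by right; right; right.
  by right; rewrite L3 // mulrN mulrnAr L5 L4 // mulrnAr mulrA -mulrnA.
- exists a; split; first by right; left.
  by right; rewrite L3 // mulrN mulrnAr L5 L2 // mulrnAr -mulrnA.
Qed.

End Quat.


Lemma q6_neq0 : q6 != 0.
Proof.
rewrite /q6 mulf_eq0 invr_eq0 negb_or pnatr_eq0 andbT.
apply/negP; rewrite addrC addr_eq0 => /eqP H.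
have : ('i * sqrtC 3%:R) ^+ 2 = (-1 : algC) ^+ 2 by rewrite H.
rewrite exprMn sqrCi sqrtCK sqrrN expr1n mulN1r => /eqP.
by rewrite -subr_eq0 -opprD natr1 oppr_eq0 pnatr_eq0.
Qed.

Definition cc : algC := - 1 / (2%:R * q6).

Lemma cc_neq0 : cc != 0.
Proof.
by rewrite /cc mulN1r oppr_eq0 invr_eq0 mulf_neq0 // ?q6_neq0 // pnatr_eq0.
Qed.

Lemma scal4 (y : A) : ((cc *+ 4)^-1 * cc) *: (y *+ 4) = y.
Proof.
rewrite -scalerMnr scalerMnl -mulrnAr mulVf ?scale1r //.
by rewrite mulrn_eq0 negb_or cc_neq0.
Qed.

Lemma conj_mul (g : A) : g \is a GRing.unit -> {morph conjA g : x y / x * y}.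
Proof. by move=> gU x y; rewrite /conjA !mulrA (mulrK gU). Qed.

Lemma conj_1 (g : A) : g \is a GRing.unit -> conjA g 1 = 1.
Proof. by move=> gU; rewrite /conjA mulr1 mulVr. Qed.

Lemma conj_N (g x : A) : conjA g (- x) = - conjA g x.
Proof. by rewrite /conjA mulrN mulNr. Qed.

Lemma conj_Z (g x : A) (k : algC) : conjA g (k *: x) = k *: conjA g x.
Proof. by rewrite /conjA -scalerAr -scalerAl. Qed.

Section Main.
Variables (K : nat) (u v : 'I_K.+1 -> A).
Hypotheses  (G1u : forall i, u i * u i = -1)
  (G1v : forall i, v i * v i = -1)
  (G2 : forall i j : 'I_K.+1, (i <= j.+1)%N && (j <= i.+1)%N ->
          gcomm (u i) (v j) = -1)
  (G3 : forall i j : 'I_K.+1, ~~ ((i <= j.+1)%N && (j <= i.+1)%N) ->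
          gcomm (u i) (v j) = 1)
  (G4 : forall i j, gcomm (u i) (u j) = 1 /\ gcomm (v i) (v j) = 1)
  (Hspan : forall x : A, exists c : word_index K.+1 -> algC,
             x = \sum_(w : word_index K.+1) c w *: word u v w)
  (Hfree : forall c : word_index K.+1 -> algC,
             \sum_(w : word_index K.+1) c w *: word u v w = 0 ->
             forall w, c w = 0).

Lemma uU i : u i \is a GRing.unit.
Proof. by apply/unitrP; exists (- u i); rewrite mulrN mulNr G1u opprK. Qed.
Lemma vU i : v i \is a GRing.unit.
Proof. by apply/unitrP; exists (- v i); rewrite mulrN mulNr G1v opprK. Qed.
Lemma ucm i j : u i * u j = u j * u i.
Proof. exact: gcomm_p1 (uU i) (uU j) (G4 i j).1. Qed.
Lemma vcm i j : v i * v j = v j * v i.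
Proof. exact: gcomm_p1 (vU i) (vU j) (G4 i j).2. Qed.
Lemma uvs i j : u i * v j = v j * u i \/ u i * v j = -(v j * u i).
Proof.
case E: ((i <= j.+1)%N && (j <= i.+1)%N).
  by right; apply: gcomm_m1 (uU i) (vU j) (G2 E).
by left; apply: gcomm_p1 (uU i) (vU j) (G3 _); rewrite E.
Qed.
Lemma uv_anti i : u i * v i = - (v i * u i).
Proof. by apply: gcomm_m1 (uU i) (vU i) (G2 _); rewrite !leqnSn. Qed.

Definition SW1 := @SW_1 K u v.
Definition SWu := @SW_u K u v G1u ucm uvs.
Definition SWv := @SW_v K u v G1v vcm.
Definition SWm := @SW_mul K u v G1u G1v ucm vcm uvs.
Definition SWN := @SW_N K u v.
Definition SWp := @SW_prod K u v G1u G1v ucm vcm uvs.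

Definition s := sgen q6 u v.
Definition t i := (cc *+ 4)^-1 *: ((1 - v i) * (1 - u i)).

Lemma sE i : s i = cc *: ((1 + u i) * (1 + v i)).
Proof.
rewrite /s /sgen; congr (_ *: _).
by rewrite mulrDr mulr1 !mulrDl !mul1r addrA.
Qed.

Lemma st i : s i * t i = 1 /\ t i * s i = 1.
Proof.
rewrite sE /t; split.
  rewrite -scalerAr -scalerAl scalerA.
  rewrite -mulrA L2 // mulrnAr -[(1 + u i) * (1 - u i)]mulr1 -mulrA L2 //.
  by rewrite -mulrnA; exact: scal4.
rewrite -scalerAr -scalerAl scalerA [cc * _]mulrC.
rewrite -mulrA L1 // mulrnAr -[(1 - v i) * (1 + v i)]mulr1 -mulrA L1 //.
by rewrite -mulrnA; exact: scal4.
Qed.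

Lemma sU i : s i \is a GRing.unit.
Proof. by apply/unitrP; exists (t i); have [H1 H2] := st i; split. Qed.

Lemma sinv i : (s i)^-1 = t i.
Proof.
have [H1 H2] := st i.
by rewrite -[(s i)^-1]mulr1 -H1 mulrA mulVr ?sU // mul1r.
Qed.

Lemma conjsE i x : conjA (s i) x =
  ((cc *+ 4)^-1 * cc) *: ((1 - v i) * ((1 - u i) * (x * ((1 + u i) * (1 + v i))))).
Proof.
rewrite /conjA sinv sE /t -scalerAr -!scalerAl scalerA [cc * _]mulrC.
by rewrite !mulrA.
Qed.

Lemma conj_gen i g : SW u v g ->
  (g * u i = u i * g \/ g * u i = -(u i * g)) ->
  (g * v i = v i * g \/ g * v i = -(v i * g)) ->
  SW u v (conjA (s i) g).
Proof.
move=> Hg Ha Hb.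
have [e [He HH]] := qconj (G1u i) (G1v i) (uv_anti i) Ha Hb.
have SWe : SW u v e.
  case: He => [->|[->|[->|->]]].
  - exact: SW1.
  - exact: SWu.
  - exact: SWv.
  - by apply: SWm; [exact: SWu|exact: SWv].
have SWeg : SW u v (e * g) by apply: SWm.
rewrite conjsE; case: HH => ->.
  by rewrite scal4.
by rewrite scalerN scal4; apply: SWN.
Qed.


Lemma conj_u i j : SW u v (conjA (s i) (u j)).
Proof. by apply: conj_gen; [exact: SWu|left; exact: ucm|exact: uvs]. Qed.

Lemma conj_v i j : SW u v (conjA (s i) (v j)).
Proof.
apply: conj_gen; [exact: SWv| |left; exact: vcm].
by case: (uvs i j) => H; [left|right]; rewrite H ?opprK.
Qed.

Lemma conjS i x : SW u v x -> SW u v (conjA (s i) x).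
Proof.
have Hw w : SW u v (conjA (s i) (word u v w)).
  rewrite /word (conj_mul (sU i)); apply: SWm;
    rewrite (big_morph _ (conj_mul (sU i)) (conj_1 (sU i))); apply: SWp => j.
  - by case: (w.1 j); [apply: conj_u|rewrite conj_1 ?sU //; exact: SW1].
  - by case: (w.2 j); [apply: conj_v|rewrite conj_1 ?sU //; exact: SW1].
by move=> [w [->|->]]; [exact: Hw|rewrite conj_N; apply: SWN; exact: Hw].
Qed.

Lemma word_inj w1 w2 (k : algC) : word u v w1 = k *: word u v w2 -> w1 = w2.
Proof.
move=> H; apply/eqP/negPn/negP => ne.
have pick (w0 : word_index K.+1) (a : algC) :
    \sum_x (if x == w0 then a else 0) *: word u v x = a *: word u v w0.
  by rewrite (bigD1 w0) //= eqxx big1 ?addr0 // => x /negPf ->; rewrite scale0r.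
pose c := fun x => (if x == w1 then 1 else 0) - (if x == w2 then k else 0).
have E : \sum_x c x *: word u v x = 0.
  rewrite /c; under eq_bigr do rewrite scalerBl.
  by rewrite sumrB !pick scale1r H subrr.
have := Hfree E w1.
by rewrite /c eqxx (negPf ne) subr0 => /eqP; rewrite oner_eq0.
Qed.

Lemma conj_inj (g x y : A) : g \is a GRing.unit -> conjA g x = conjA g y -> x = y.
Proof.
move=> gU; rewrite /conjA => H.
have := congr1 (fun z => g * (z * g^-1)) H.
by rewrite /= !mulrK // !mulrA !mulrV // !mul1r.
Qed.

Lemma claim1 i : exists (sigma : {perm word_index K.+1}) (sg : word_index K.+1 -> bool),
  forall w, conjA (s i) (word u v w) = (-1) ^+ sg w *: word u v (sigma w).
Proof.
have E w : exists w', (conjA (s i) (word u v w) == word u v w') ||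
                      (conjA (s i) (word u v w) == - word u v w').
  by have [w' [H|H]] := conjS i (SW_word u v w); exists w'; rewrite H eqxx ?orbT.
pose f w := xchoose (E w).
have fP w : (conjA (s i) (word u v w) == word u v (f w)) ||
              (conjA (s i) (word u v w) == - word u v (f w)) := xchooseP (E w).
have finj : injective f.
  move=> w1 w2 Ef.
  have := fP w1; have := fP w2; rewrite -Ef.
  move=> /orP[/eqP H2|/eqP H2] /orP[/eqP H1|/eqP H1].
  - apply: (@word_inj _ _ 1); rewrite scale1r; apply: (conj_inj (sU i)).
    by rewrite H1 H2.
  - apply: (@word_inj _ _ (-1)); rewrite scaleN1r; apply: (conj_inj (sU i)).
    by rewrite conj_N H1 H2.
  - apply: (@word_inj _ _ (-1)); rewrite scaleN1r; apply: (conj_inj (sU i)).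
    by rewrite conj_N H1 H2 opprK.
  - apply: (@word_inj _ _ 1); rewrite scale1r; apply: (conj_inj (sU i)).
    by rewrite H1 H2.
exists (perm finj), (fun w => ~~ (conjA (s i) (word u v w) == word u v (f w))).
move=> w; rewrite permE; have := fP w.
case: eqP => [-> _ | _ /= /eqP ->]; by rewrite /= ?expr0 ?scale1r ?expr1 ?scaleN1r.
Qed.

Lemma unconj (g x : A) : g \is a GRing.unit -> g * conjA g x * g^-1 = x.
Proof. by move=> gU; rewrite /conjA !mulrA mulrV // mul1r mulrK. Qed.

Lemma conjSV j w' : SW u v (s j * word u v w' * (s j)^-1).
Proof.
have [sigma [sg H]] := claim1 j.
have := H ((sigma^-1)%g w'); rewrite permKV.
case: (sg _) => /= H'.
  have -> : word u v w' = - conjA (s j) (word u v ((sigma^-1)%g w')).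
    by rewrite H' expr1 scaleN1r opprK.
  by rewrite mulrN mulNr unconj ?sU //; apply: SWN; exact: SW_word.
have -> : word u v w' = conjA (s j) (word u v ((sigma^-1)%g w')).
  by rewrite H' expr0 scale1r.
by rewrite unconj ?sU //; exact: SW_word.
Qed.

Lemma gen_SW h : in_gen s h -> h \is a GRing.unit /\ forall w, SW u v (conjA h (word u v w)).
Proof.
move=> Hgen; elim: Hgen => [|g j _ [gU Hg]|g j _ [gU Hg]].
- split; first exact: unitr1.
  by move=> w; rewrite /conjA invr1 mul1r mulr1; exact: SW_word.
- split; first by rewrite unitrMr // sU.
  move=> w; have -> : conjA (g * s j) (word u v w) = conjA (s j) (conjA g (word u v w)).
    by rewrite /conjA invrM ?sU // !mulrA.
  exact: conjS (Hg w).
- split; first by rewrite unitrMr // unitrV sU.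
  move=> w; have -> : conjA (g * (s j)^-1) (word u v w) =
      s j * conjA g (word u v w) * (s j)^-1.
    by rewrite /conjA invrM ?unitrV ?sU // invrK !mulrA.
  have [w' [->|->]] := Hg w; first exact: conjSV.
  by rewrite mulrN mulNr; apply: SWN; exact: conjSV.
Qed.

Definition Phi := {ffun word_index K.+1 -> bool * word_index K.+1}.
Definition matches (phi : Phi) (g : A) := forall w,
  conjA g (word u v w) = (if (phi w).1 then - word u v (phi w).2 else word u v (phi w).2).
Definition Fj (j : 'I_#|{: Phi}|) (x : A) :=
  conjA (epsilon (inhabits (0 : A)) (fun g => matches (enum_val j) g)) x.

Lemma conj_lin (g : A) (c : word_index K.+1 -> algC) :
  conjA g (\sum_w c w *: word u v w) = \sum_w c w *: conjA g (word u v w).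
Proof.
rewrite /conjA mulr_sumr mulr_suml; apply: eq_bigr => w _.
by rewrite -scalerAr -scalerAl.
Qed.

Lemma claim2 g : in_gen s g -> exists j, forall x, conjA g x = Fj j x.
Proof.
move=> /gen_SW [gU Hg].
have E w : exists p : bool * word_index K.+1,
    conjA g (word u v w) == (if p.1 then - word u v p.2 else word u v p.2).
  by have [w' [H|H]] := Hg w; [exists (false, w')|exists (true, w')]; rewrite H eqxx.
pose phi : Phi := [ffun w => xchoose (E w)].
have Mg : matches phi g by move=> w; rewrite ffunE; apply/eqP; exact: (xchooseP (E w)).
exists (enum_rank phi) => x.
rewrite /Fj; set g' := epsilon _ _.
have Mg' : matches phi g'.
  rewrite /g' -[X in matches X _](enum_rankK phi).
  by apply: epsilon_spec; exists g; rewrite enum_rankK.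
have [c ->] := Hspan x; rewrite !conj_lin; apply: eq_bigr => w _.
by rewrite Mg Mg'.
Qed.

Lemma claim3 g : in_gen s g -> (forall x, conjA g x = x) -> forall y, g * y = y * g.
Proof.
move=> /gen_SW [gU _] H y.
by rewrite -{1}(H y) /conjA !mulrA mulrV // mul1r.
Qed.

Lemma mainK :
  (forall i, s i \is a GRing.unit /\
     exists (sigma : {perm word_index K.+1}) (sg : word_index K.+1 -> bool),
       forall w, conjA (s i) (word u v w) = (-1) ^+ sg w *: word u v (sigma w))
  /\ (exists (k : nat) (F : 'I_k -> A -> A),
        forall g, in_gen s g -> exists j, forall x, conjA g x = F j x)
  /\ (forall g, in_gen s g -> (forall x, conjA g x = x) ->
        forall y, g * y = y * g).
Proof.
split; first by move=> i; split; [exact: sU|exact: claim1].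
split; last exact: claim3.
by exists #|{: Phi}|, Fj; exact: claim2.
Qed.

End Main.

End Gen.

Unset Implicit Arguments.
Set Strict Implicit.

Theorem mainTheorem7 (n : nat) (hn : (2 <= n)%N)
  (A : unitAlgType algC) (u v : 'I_n.-1 -> A)
  (G1u : forall i, u i * u i = -1)
  (G1v : forall i, v i * v i = -1)
  (G2 : forall i j : 'I_n.-1, (i <= j.+1)%N && (j <= i.+1)%N ->
          gcomm (u i) (v j) = -1)
  (G3 : forall i j : 'I_n.-1, ~~ ((i <= j.+1)%N && (j <= i.+1)%N) ->
          gcomm (u i) (v j) = 1)
  (G4 : forall i j, gcomm (u i) (u j) = 1 /\ gcomm (v i) (v j) = 1)
  (Hspan : forall x : A, exists c : word_index n.-1 -> algC,
             x = \sum_(w : word_index n.-1) c w *: word u v w)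
  (Hfree : forall c : word_index n.-1 -> algC,
             \sum_(w : word_index n.-1) c w *: word u v w = 0 ->
             forall w, c w = 0) :
  let s := sgen q6 u v in
  (forall i, s i \is a GRing.unit /\
     exists (sigma : {perm word_index n.-1}) (sg : word_index n.-1 -> bool),
       forall w, conjA (s i) (word u v w) = (-1) ^+ sg w *: word u v (sigma w))
  /\ (exists (k : nat) (F : 'I_k -> A -> A),
        forall g, in_gen s g -> exists j, forall x, conjA g x = F j x)
  /\ (forall g, in_gen s g -> (forall x, conjA g x = x) ->
        forall y, g * y = y * g).
Proof.
case: n hn u v G1u G1v G2 G3 G4 Hspan Hfree => [|[|K]] // _ u v G1u G1v G2 G3 G4 Hspan Hfree.
exact: (mainK G1u G1v G2 G3 G4 Hspan Hfree).
Qed.
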